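(* For every infinite word $u\in A^{\mathbb{N}}$, the worm $W(u)$ tiles the integer half-space by translations: $\mathbb{H}=W(u)\oplus\Lambda$, i.e. every $z\in\mathbb{H}$ is written uniquely as $w+t$ with $w\in W(u)$, $t\in\Lambda$.
   Context: $A=\{0,\dots,d\}$, $h(y)=\sum_iy_i$ on $\mathbb{R}^{d+1}$, $\mathbb{H}=\{z\in\mathbb{Z}^{d+1}:h(z)\ge0\}$, $\Lambda=\{z\in\mathbb{Z}^{d+1}:h(z)=0\}$. $W(u)=\{\mathrm{ab}(p):p\text{ finite prefix of }u\}$, where $\mathrm{ab}(p)\in\mathbb{Z}^{d+1}$ counts the occurrences of each letter in $p$. *)

(* Defs.v *)
From mathcomp Require Import all_boot all_order all_algebra.
Set Implicit Arguments. Unset Strict Implicit. Unset Printing Implicit Defensive.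
Import Order.TTheory GRing.Theory Num.Theory.
Local Open Scope ring_scope.

(* Alphabet A = {0,...,d} is 'I_d.+1; points of Z^{d+1} are {ffun 'I_d.+1 -> int}. *)
Definition vec (d : nat) := {ffun 'I_d.+1 -> int}.

Definition h (d : nat) (y : vec d) : int := \sum_(i < d.+1) y i.

Definition inH (d : nat) (z : vec d) : Prop := 0 <= h z.
Definition inLambda (d : nat) (z : vec d) : Prop := h z = 0.

Definition ab_prefix (d : nat) (u : nat -> 'I_d.+1) (n : nat) : vec d :=
  [ffun i => (count (fun k => u k == i) (iota 0 n))%:Z].

(* worm W(u) = { ab(p) : p finite prefix of u } (prefixes include the empty one) *)
Definition inWorm (d : nat) (u : nat -> 'I_d.+1) (w : vec d) : Prop :=
  exists n : nat, w = ab_prefix u n.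

(* Main.v *)
Require Import Defs.
From mathcomp Require Import all_boot all_order all_algebra.
Import Order.TTheory GRing.Theory Num.Theory.
Local Open Scope ring_scope.

Lemma h_ab (d : nat) (u : nat -> 'I_d.+1) (n : nat) : h (ab_prefix u n) = n%:Z.
Proof.
rewrite /h; elim: n => [|n IH].
  by rewrite big1 // => i _; rewrite ffunE.
under eq_bigr => i _ do rewrite ffunE -[n.+1]addn1 iotaD add0n.
under eq_bigr => i _ do rewrite count_cat /= addn0 PoszD.
rewrite big_split /=.
have -> : \sum_(i < d.+1) ((count (fun k => u k == i) (iota 0 n))%:Z) = n%:Z.
  by rewrite -IH; apply: eq_bigr => i _; rewrite ffunE.
rewrite (bigD1 (u n)) //= eqxx big1 ?addr0; first by rewrite -PoszD addn1.
by move=> i /negbTE; rewrite eq_sym => ->.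
Qed.

Theorem lemma3p14 (d : nat) (u : nat -> 'I_d.+1) :
  forall z : vec d, inH z <->
    (exists wt : vec d * vec d,
       [/\ inWorm u wt.1, inLambda wt.2 & z = wt.1 + wt.2] /\
       forall wt' : vec d * vec d,
         [/\ inWorm u wt'.1, inLambda wt'.2 & z = wt'.1 + wt'.2] -> wt' = wt).
Proof.
have hD : forall x y : vec d, h (x + y) = h x + h y.
  by move=> x y; rewrite /h -big_split; apply: eq_bigr => i _; rewrite ffunE.
move=> z; split.
- rewrite /inH => Hz.
  have [n Hn] : exists n : nat, h z = n%:Z.
    by exists `|h z|%N; rewrite gez0_abs.
  exists (ab_prefix u n, z - ab_prefix u n); split.
    split => //=; first by exists n.
      have E := hD (ab_prefix u n) (z - ab_prefix u n).
      rewrite addrC subrK h_ab Hn in E.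
      by apply: (addrI n%:Z); rewrite addr0 -E.
    by rewrite addrC subrK.
  case=> w t /= [[m Ew]] Ht Hzt; subst w.
  have : h z = m%:Z by rewrite Hzt hD h_ab Ht addr0.
  rewrite Hn => Em; have Em2 : n = m by case: Em.
  subst m; by rewrite Hzt [ab_prefix u n + t]addrC addrK.
- case=> [[w t]] /= [[[m Ew]] Ht Hzt] _; subst w.
  by rewrite /inH Hzt hD h_ab Ht addr0.
Qed.
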